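(* Let $k\ge1$, let $t_1\ge t_2\ge\cdots\ge t_k\ge 1$ be integers, set $t_{k+1}=0$ and $n=\sum_{i=1}^k t_i$, and let \[ A_0+\lambda E_0=\begin{bmatrix}\lambda E_{1,1} & A_{1,2} & & \\ & \ddots & \ddots & \\ & & \lambda E_{k-1,k-1} & A_{k-1,k}\\ & & & \lambda E_{k,k}\end{bmatrix}\in\mathbb{C}[\lambda]^{n\times n} \] be a block bidiagonal pencil with block rows and block columns of sizes $t_1,\dots,t_k$ (unmarked blocks zero), where $E_{i,i}\in\mathbb{C}^{t_i\times t_i}$ and $A_{i,i+1}=\begin{bmatrix}\hat A_{i,i+1}\\0\end{bmatrix}\in\mathbb{C}^{t_i\times t_{i+1}}$ with $\hat A_{i,i+1}\in\mathbb{C}^{t_{i+1}\times t_{i+1}}$, and both $\hat A_{i,i+1}$ and $E_{i,i}$ invertible upper triangular. Let $\hat Z_i:=-E_{i,i}^{-1}A_{i,i+1}\in\mathbb{C}^{t_i\times t_{i+1}}$ for $i=1,\dots,k-1$. For $j=1,\dots,k$ let $X_j(\lambda)\in\mathbb{C}[\lambda]^{n\times t_j}$ be the block vector whose $\ell$-th block ($\ell=1,\dots,j$) is $\lambda^{\ell-1}\hat Z_\ell\hat Z_{\ell+1}\cdots\hat Z_{j-1}$ (for $\ell=j$ this is $\lambda^{j-1}I_{t_j}$) and whose blocks $j+1,\dots,k$ are zero, and let $Q_j(\lambda):=X_j(\lambda)\,[e_{t_{j+1}+1}\ \cdots\ e_{t_j}]\in\mathbb{C}[\lambda]^{n\times(t_j-t_{j+1})}$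 consist of the rightmost $t_j-t_{j+1}$ columns of $X_j(\lambda)$ (here $e_p$ denotes the $p$-th standard basis vector of $\mathbb{C}^{t_j}$). Then the only eigenvalue of $A_0+\lambda E_0$ is $\lambda=0$, and the columns of $Q_k(\lambda),Q_{k-1}(\lambda),\dots,Q_1(\lambda)$ together form a maximal set of root polynomials at $0$ for $A_0+\lambda E_0$.
   Context: An eigenvalue of a pencil $P(\lambda)$ is $\mu\in\mathbb{C}$ with $\operatorname{rank}_{\mathbb{C}}P(\mu)$ smaller than its rank over $\mathbb{C}(\lambda)$. Let $N(\lambda)$ be a right minimal basis of $P$ (a polynomial basis of $\{x\in\mathbb{C}(\lambda)^n:Px=0\}$ with minimal sum of column degrees; empty if $P$ is regular). For $k\ge1$, a polynomial vector $x$ is a zero direction of order $k$ at $\lambda_0$ if $x(\lambda_0)\ne0$ and $P(\lambda)x(\lambda)=(\lambda-\lambda_0)^kw(\lambda)$ with $w$ polynomial, $w(\lambda_0)\ne0$; it is a root polynomial of order $k$ if moreover $[N(\lambda_0)\ x(\lambda_0)]$ has full column rank. Zero directions $r_1,\dots,r_s$ of orders $k_1,\dots,k_s$ are $\lambda_0$-independent if $[N(\lambda_0)\ r_1(\lambda_0)\cdots r_s(\lambda_0)]$ has full column rank; such a set is complete if no larger $\lambda_0$-independent set exists; it is ordered if $k_1\ge\cdots\ge k_s>0$; a complete ordered set is maximal if for no $j$ is there a root polynomial $\tilde r$ of order $k>k_j$ with $[N(\lambda_0)\ r_1(\lambda_0)\cdots r_{j-1}(\lambda_0)\ \tilde r(\lambda_0)]$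 of full column rank. (The columns of $Q_j$ have order $j$, so listing $Q_k,\dots,Q_1$ gives non-increasing orders.) *)

(* Defs.v *)
From HB Require Import structures.
From mathcomp Require Import all_boot all_order all_algebra.
Set Implicit Arguments. Unset Strict Implicit. Unset Printing Implicit Defensive.
Import Order.TTheory GRing.Theory Num.Theory.
Local Open Scope ring_scope.

Section PencilDefs.
Variable C : numClosedFieldType.
Local Notation P := {poly C}.
Local Notation K := {fraction {poly C}}.

Definition tofracP (p : P) : K := @FracField.tofrac {poly C} p.

Definition rankF m n (M : 'M[P]_(m, n)) : nat := \rank (map_mx tofracP M).

Definition evalmx m n (M : 'M[P]_(m, n)) (mu : C) : 'M[C]_(m, n) :=
  map_mx (fun p => p.[mu]) M.

Definition is_eigenvalue m n (M : 'M[P]_(m, n)) (mu : C) : Prop :=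
  (\rank (evalmx M mu) < rankF M)%N.

Definition coldeg n p (N : 'M[P]_(n, p)) (j : 'I_p) : nat :=
  (\max_(i < n) size (N i j)).-1.
Definition sumcoldeg n p (N : 'M[P]_(n, p)) : nat := \sum_(j < p) coldeg N j.

Definition is_poly_kernel_basis m n p (M : 'M[P]_(m, n)) (N : 'M[P]_(n, p)) :=
  [/\ M *m N = 0, rankF N = p & (p + rankF M)%N = n].

Definition is_right_minimal_basis m n p (M : 'M[P]_(m, n)) (N : 'M[P]_(n, p)) :=
  is_poly_kernel_basis M N /\
  forall N' : 'M[P]_(n, p), is_poly_kernel_basis M N' ->
    (sumcoldeg N <= sumcoldeg N')%N.

Definition zero_direction m n (M : 'M[P]_(m, n)) (l0 : C) (x : 'cV[P]_n)
    (k : nat) : Prop :=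
  [/\ (1 <= k)%N, evalmx x l0 != 0 &
      exists w : 'cV[P]_m,
        M *m x = ('X - l0%:P) ^+ k *: w /\ evalmx w l0 != 0].

Definition full_col_rank m n (B : 'M[C]_(m, n)) : Prop := \rank B = n.

Definition root_polynomial m n p (M : 'M[P]_(m, n)) (N : 'M[P]_(n, p))
    (l0 : C) (x : 'cV[P]_n) (k : nat) : Prop :=
  zero_direction M l0 x k /\ full_col_rank (evalmx (row_mx N x) l0).

Definition zero_directions m n s (M : 'M[P]_(m, n)) (l0 : C)
    (R : 'M[P]_(n, s)) (ord : 'I_s -> nat) : Prop :=
  forall i : 'I_s, zero_direction M l0 (col i R) (ord i).

Definition l0_independent m n p s (M : 'M[P]_(m, n)) (N : 'M[P]_(n, p))
    (l0 : C) (R : 'M[P]_(n, s)) (ord : 'I_s -> nat) : Prop :=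
  zero_directions M l0 R ord /\ full_col_rank (evalmx (row_mx N R) l0).

Definition complete_set m n p s (M : 'M[P]_(m, n)) (N : 'M[P]_(n, p))
    (l0 : C) (R : 'M[P]_(n, s)) (ord : 'I_s -> nat) : Prop :=
  l0_independent M N l0 R ord /\
  forall s' (R' : 'M[P]_(n, s')) (ord' : 'I_s' -> nat),
    l0_independent M N l0 R' ord' -> (s' <= s)%N.

Definition ordered_set s (ord : 'I_s -> nat) : Prop :=
  (forall i j : 'I_s, (i <= j)%N -> (ord j <= ord i)%N) /\
  (forall i, 0 < ord i)%N.

Definition first_cols n s (R : 'M[P]_(n, s)) (j : 'I_s) : 'M[P]_(n, j) :=
  colsub (fun c : 'I_j => widen_ord (ltnW (ltn_ord j)) c) R.

Definition maximal_set m n p s (M : 'M[P]_(m, n)) (N : 'M[P]_(n, p))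
    (l0 : C) (R : 'M[P]_(n, s)) (ord : 'I_s -> nat) : Prop :=
  [/\ complete_set M N l0 R ord, ordered_set ord &
      forall j : 'I_s, ~ exists (x : 'cV[P]_n) (kk : nat),
        [/\ root_polynomial M N l0 x kk, (ord j < kk)%N &
            full_col_rank (evalmx (row_mx N (row_mx (first_cols R j) x)) l0)]].

(* entry of a matrix accessed with natural-number indices (0 out of range) *)
Definition ent (T : nmodType) m n (B : 'M[T]_(m, n)) (r c : nat) : T :=
  match @insub _ (fun x => x < m)%N _ r, @insub _ (fun x => x < n)%N _ c with
  | Some r', Some c' => B r' c'
  | _, _ => 0
  end.

(* the block sizes are t 1, ..., t k (1-indexed) *)
Definition nsum (t : nat -> nat) (k : nat) : nat := (\sum_(1 <= i < k.+1) t i)%N.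
(* 0-based starting position of block i *)
Definition boff (t : nat -> nat) (i : nat) : nat := (\sum_(1 <= l < i) t l)%N.
(* index (in 1..k) of the block containing global position g *)
Definition blk (t : nat -> nat) (k g : nat) : nat :=
  (\max_(i < k.+1 | (0 < i) && (boff t i <= g)) i)%N.
Definition loc (t : nat -> nat) (k g : nat) : nat := (g - boff t (blk t k g))%N.

(* A_{i,i+1} = [Ahat_{i,i+1}; 0] *)
Definition Ablk (t : nat -> nat) (Ahat : forall i, 'M[C]_(t i.+1)) (i : nat)
  : 'M[C]_(t i, t i.+1) := \matrix_(r < t i, c < t i.+1) ent (Ahat i) r c.

Definition E0mx (t : nat -> nat) k (E : forall i, 'M[C]_(t i))
  : 'M[C]_(nsum t k) :=
  \matrix_(g, h) (if blk t k g == blk t k h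
                  then ent (E (blk t k g)) (loc t k g) (loc t k h) else 0).

Definition A0mx (t : nat -> nat) k (Ahat : forall i, 'M[C]_(t i.+1))
  : 'M[C]_(nsum t k) :=
  \matrix_(g, h) (if blk t k h == (blk t k g).+1
                  then ent (Ablk Ahat (blk t k g)) (loc t k g) (loc t k h) else 0).

Definition pencil (t : nat -> nat) k (E : forall i, 'M[C]_(t i))
    (Ahat : forall i, 'M[C]_(t i.+1)) : 'M[P]_(nsum t k) :=
  map_mx polyC (A0mx k Ahat) + 'X *: map_mx polyC (E0mx k E).

Definition Zhat (t : nat -> nat) (E : forall i, 'M[C]_(t i))
    (Ahat : forall i, 'M[C]_(t i.+1)) (i : nat) : 'M[C]_(t i, t i.+1) :=
  - (invmx (E i) *m Ablk Ahat i).

(* Zprod l d = Zhat_l Zhat_{l+1} ... Zhat_{l+d-1} (identity if d = 0) *)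
Fixpoint Zprod (t : nat -> nat) (E : forall i, 'M[C]_(t i))
    (Ahat : forall i, 'M[C]_(t i.+1)) (l d : nat) : 'M[C]_(t l, t (d + l)) :=
  match d with
  | 0 => 1%:M
  | d'.+1 => Zprod E Ahat l d' *m Zhat E Ahat (d' + l)
  end.

(* X_j(lambda): block l (1 <= l <= j) is lambda^(l-1) Zhat_l ... Zhat_{j-1} *)
Definition Xmat (t : nat -> nat) k (E : forall i, 'M[C]_(t i))
    (Ahat : forall i, 'M[C]_(t i.+1)) (j : nat) : 'M[P]_(nsum t k, t j) :=
  \matrix_(g, c) (let l := blk t k g in
                  if (l <= j)%N
                  then 'X ^+ (l.-1) * (ent (Zprod E Ahat l (j - l)) (loc t k g) c)%:P
                  else 0).

(* Q_j(lambda): the rightmost t_j - t_{j+1} columns of X_j *)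
Definition Qmat (t : nat -> nat) k (E : forall i, 'M[C]_(t i))
    (Ahat : forall i, 'M[C]_(t i.+1)) (j : nat)
  : 'M[P]_(nsum t k, t j - t j.+1) :=
  \matrix_(g, c) ent (Xmat k E Ahat j) g (c + t j.+1).

(* position c (0-based, c < t 1) of [Q_k Q_{k-1} ... Q_1] lies in Q_(qblk c) *)
Definition qblk (t : nat -> nat) k (c : nat) : nat :=
  (\max_(j < k.+1 | (0 < j) && (c < t j)) j)%N.

(* the concatenation [Q_k(lambda) Q_{k-1}(lambda) ... Q_1(lambda)] *)
Definition Qcat (t : nat -> nat) k (E : forall i, 'M[C]_(t i))
    (Ahat : forall i, 'M[C]_(t i.+1)) : 'M[P]_(nsum t k, t 1%N) :=
  \matrix_(g, c) (let j := qblk t k c in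
                  ent (Qmat k E Ahat j) g (c - t j.+1)).

(* the order attached to each column: columns of Q_j have order j *)
Definition Qord (t : nat -> nat) k (c : 'I_(t 1%N)) : nat := qblk t k c.

Definition upper_tri m (B : 'M[C]_m) : Prop :=
  forall i j : 'I_m, (j < i)%N -> B i j = 0.

End PencilDefs.

(* Main.v *)
Require Import Defs.
From HB Require Import structures.
From mathcomp Require Import all_boot all_order all_algebra.
From mathcomp Require Import zify.
Set Implicit Arguments. Unset Strict Implicit. Unset Printing Implicit Defensive.
Import Order.TTheory GRing.Theory Num.Theory.
Local Open Scope ring_scope.

Lemma ent_ord (T : nmodType) m n (B : 'M[T]_(m, n)) (i : 'I_m) (j : 'I_n) :
  ent B i j = B i j.
Proof.
rewrite /ent; case: insubP => [i' _ /val_inj -> |]; last by rewrite ltn_ord.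
by case: insubP => [j' _ /val_inj -> |]; last by rewrite ltn_ord.
Qed.

Lemma ent_outr (T : nmodType) m n (B : 'M[T]_(m, n)) r c :
  (m <= r)%N -> ent B r c = 0.
Proof. by move=> h; rewrite /ent; case: insubP => // u; rewrite ltnNge h. Qed.

Lemma ent_outc (T : nmodType) m n (B : 'M[T]_(m, n)) r c :
  (n <= c)%N -> ent B r c = 0.
Proof.
move=> h; rewrite /ent; case: insubP => // u _ _.
by case: insubP => // v; rewrite ltnNge h.
Qed.

Lemma ent_nat (T : nmodType) m n (B : 'M[T]_(m, n)) r c (hr : (r < m)%N) (hc : (c < n)%N) :
  ent B r c = B (Ordinal hr) (Ordinal hc).
Proof. by rewrite -ent_ord. Qed.

Lemma ent_mul (R : pzSemiRingType) m n p (A : 'M[R]_(m, n)) (B : 'M[R]_(n, p)) r c :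
  ent (A *m B) r c = \sum_(s < n) ent A r s * ent B s c.
Proof.
case: (ltnP r m) => hr; last first.
  by rewrite ent_outr // big1 // => s _; rewrite ent_outr // mul0r.
case: (ltnP c p) => hc; last first.
  by rewrite ent_outc // big1 // => s _; rewrite (ent_outc _ _ hc) mulr0.
rewrite ent_nat mxE; apply: eq_bigr => s _.
by rewrite -(ent_ord A (Ordinal hr)) -(ent_ord B _ (Ordinal hc)).
Qed.

Lemma big_nat_pick (R : nmodType) a b i (F : nat -> R) :
  \sum_(a <= j < b) (if j == i then F j else 0) = if (a <= i < b)%N then F i else 0.
Proof.
case: ifP => hi.
  rewrite (bigD1_seq i) ?mem_index_iota ?iota_uniq //= eqxx big1 ?addr0 //.
  by move=> j /negPf ->.
rewrite big_nat big1 // => j hj; case: eqP => // ?; subst j; by rewrite hj in hi.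
Qed.

Lemma tri_support (F : fieldType) m (U : 'M[F]_m) (y : 'I_m -> F) T :
  (forall i j : 'I_m, (j < i)%N -> U i j = 0) ->
  (forall i, U i i != 0) ->
  (forall r : 'I_m, (T <= r)%N -> \sum_s U r s * y s = 0) ->
  forall s : 'I_m, (T <= s)%N -> y s = 0.
Proof.
move=> Ut Ud H.
suff: forall d, forall s : 'I_m, (m - d <= s)%N -> (T <= s)%N -> y s = 0.
  by move=> Hd s; apply: (Hd m); rewrite subnn.
elim=> [|d IH] s hs hT.
  by move: (ltn_ord s); rewrite subn0 in hs; rewrite ltnNge hs.
case: (ltnP (m - d.+1) s) => hs'.
  by apply: IH => //; lia.
have es : (s = m - d.+1 :> nat)%N by apply/eqP; rewrite eqn_leq hs hs'.
move: (H s hT); rewrite (bigD1 s) //= big1 ?addr0.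
  by move/eqP; rewrite mulf_eq0 (negPf (Ud s)) /= => /eqP.
move=> j hj; case: (ltnP j s) => hjs; first by rewrite Ut // mul0r.
rewrite IH ?mulr0 //.
  have : (s < j)%N by rewrite ltn_neqAle eq_sym hj hjs.
  lia.
  have : (s < j)%N by rewrite ltn_neqAle eq_sym hj hjs.
  lia.
Qed.

Lemma utri_diag (F : fieldType) m (U : 'M[F]_m) :
  (forall i j : 'I_m, (j < i)%N -> U i j = 0) -> U \in unitmx -> forall i, U i i != 0.
Proof.
move=> Ut; rewrite unitmxE unitfE -det_tr det_trig; last first.
  by apply/is_trig_mxP => i j hij; rewrite mxE Ut.
move=> hp i; apply/negP => /eqP h; move/negP: hp; apply; apply/prodf_eq0.
by exists i => //; rewrite mxE h.
Qed.

Lemma colfree (F : fieldType) m s (B : 'M[F]_(m, s)) :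
  (forall v : 'cV_s, B *m v = 0 -> v = 0) -> \rank B = s.
Proof.
move=> Hinj; apply/eqP; rewrite eqn_leq rank_leq_col /=.
have K0 : kermx B^T = 0.
  apply/row_matrixP => i; rewrite row0; apply: trmx_inj; rewrite trmx0; apply: Hinj.
  have h : row i (kermx B^T) *m B^T = 0 by rewrite -row_mul mulmx_ker row0.
  by apply: trmx_inj; rewrite trmx_mul trmxK h trmx0.
have := mxrank_ker B^T; rewrite K0 mxrank0 mxrank_tr => /esym/eqP.
by rewrite subn_eq0.
Qed.

Lemma rank_rows0 (F : fieldType) m s (B : 'M[F]_(m, s)) c :
  (forall (i : 'I_m) (j : 'I_s), (c <= i)%N -> B i j = 0) -> (\rank B <= c)%N.
Proof.
move=> H; case: (leqP c m) => hc; last by apply: leq_trans (rank_leq_row B) (ltnW hc).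
have -> : B = pid_mx c *m B.
  apply/matrixP => i j; rewrite mxE (bigD1 i) //= big1 ?addr0.
    rewrite mxE eqxx /=; case: ltnP => hi; first by rewrite mul1r.
    by rewrite mul0r H.
  move=> l hl; rewrite mxE (_ : (i == l :> nat) = false) ?mul0r //.
  by apply/eqP => /val_inj h; move: hl; rewrite h eqxx.
by apply: leq_trans (mxrankM_maxl _ _) _; rewrite rank_pid_mx.
Qed.

Lemma ent0 (T : nmodType) m n r c : ent (0 : 'M[T]_(m, n)) r c = 0.
Proof. by rewrite /ent; case: insub => // ?; case: insub => // ?; rewrite mxE. Qed.

Lemma boffS t l : (1 <= l)%N -> boff t l.+1 = (boff t l + t l)%N.
Proof. by move=> hl; rewrite /boff big_nat_recr. Qed.

Lemma boff0 t : boff t 0 = 0%N. Proof. by rewrite /boff big_geq. Qed.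
Lemma boff1 t : boff t 1 = 0%N. Proof. by rewrite /boff big_geq. Qed.

Lemma boff_mono t i j : (i <= j)%N -> (boff t i <= boff t j)%N.
Proof.
move=> hij; case: i hij => [|i] hij; first by rewrite boff0.
by rewrite /boff (big_cat_nat _ hij) //= leq_addr.
Qed.

Lemma sum_blocks (R : nmodType) t K (F : nat -> R) :
  \sum_(h < boff t K.+1) F h = \sum_(1 <= l < K.+1) \sum_(s < t l) F (boff t l + s)%N.
Proof.
elim: K => [|K IH]; first by rewrite boff1 big_ord0 big_geq.
rewrite big_nat_recr //= -IH boffS //.
by rewrite big_split_ord /=.
Qed.

Lemma pos_decomp t K g : (g < boff t K.+1)%N ->
  exists l s, [/\ (1 <= l <= K)%N, (s < t l)%N & g = (boff t l + s)%N].
Proof.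
elim: K => [|K IH]; first by rewrite boff1.
rewrite boffS //; case: (ltnP g (boff t K.+1)) => h1 h2.
  by case: (IH h1) => l [s [hl hs ->]]; exists l, s; split=> //; lia.
by exists K.+1, (g - boff t K.+1)%N; split; lia.
Qed.

Lemma blk_at t k l s : (1 <= l <= k)%N -> (s < t l)%N ->
  blk t k (boff t l + s) = l.
Proof.
move=> hl hs; apply/eqP; rewrite eqn_leq; apply/andP; split.
  apply/bigmax_leqP => i /andP [hi hb]; rewrite leqNgt; apply/negP => hli.
  have := boff_mono t hli; rewrite boffS; lia.
have hl' : (l < k.+1)%N by lia.
rewrite /blk; apply: (leq_bigmax_cond (Ordinal hl')) => /=; rewrite leq_addr andbT; lia.
Qed.

Lemma loc_at t k l s : (1 <= l <= k)%N -> (s < t l)%N ->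
  loc t k (boff t l + s) = s.
Proof. by move=> hl hs; rewrite /loc blk_at // addKn. Qed.
Lemma qblk_spec (t : nat -> nat) k c : (1 <= k)%N -> (c < t 1)%N -> t k.+1 = 0%N ->
  [/\ (1 <= qblk t k c <= k)%N, (c < t (qblk t k c))%N & (t (qblk t k c).+1 <= c)%N].
Proof.
move=> hk hc htk1.
have h1 : (1 < k.+1)%N by lia.
have hcard : (0 < #|(fun j : 'I_k.+1 => (0 < j) && (c < t j))%N|)%N.
  by apply/card_gt0P; exists (Ordinal h1); rewrite /in_mem /= hc.
have [i0 hi0 e] := eq_bigmax_cond (fun j : 'I_k.+1 => nat_of_ord j) hcard.
have e' : qblk t k c = i0 by rewrite -e /qblk; apply: eq_bigl.
rewrite e'.
move: hi0; rewrite /in_mem /= => /andP [p1 p2].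
have hi0k := ltn_ord i0.
split=> //; first lia.
case: (ltnP i0 k) => hlt; last first.
  have -> : nat_of_ord i0 = k by lia.
  by rewrite htk1.
rewrite leqNgt; apply/negP => hc'.
have hl : (i0.+1 < k.+1)%N by lia.
have := @leq_bigmax_cond _ (fun j : 'I_k.+1 => (0 < j) && (c < t j))%N (fun j => nat_of_ord j) (Ordinal hl).
move=> /(_ ltac:(apply/andP; split; [done | exact: hc'])) h.
have : (i0.+1 <= qblk t k c)%N := h.
rewrite e'; lia.
Qed.

Lemma qblk_mono (t : nat -> nat) k c1 c2 : (c1 <= c2)%N -> (qblk t k c2 <= qblk t k c1)%N.
Proof.
move=> h; apply/bigmax_leqP => j /andP [p1 p2].
have := @leq_bigmax_cond _ (fun j : 'I_k.+1 => (0 < j) && (c1 < t j))%N (fun j => nat_of_ord j) j.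
move=> /(_ ltac:(apply/andP; split; [done | exact: leq_ltn_trans h p2])) h'.
exact: h'.
Qed.

Lemma Zprod_left (C : numClosedFieldType) (t : nat -> nat) (E : forall i, 'M[C]_(t i))
  (Ahat : forall i, 'M[C]_(t i.+1)) l d r c :
  ent (Zprod E Ahat l d.+1) r c = ent (Zhat E Ahat l *m Zprod E Ahat l.+1 d) r c.
Proof.
elim: d r c => [|d IH] r c; first by rewrite /= mul1mx mulmx1.
rewrite (_ : Zprod E Ahat l d.+2 = Zprod E Ahat l d.+1 *m Zhat E Ahat (d.+1 + l)) //.
rewrite [LHS]ent_mul.
under eq_bigr => u _ do rewrite IH ent_mul.
rewrite [RHS]ent_mul.
under [RHS]eq_bigr => s _ do rewrite (_ : Zprod E Ahat l.+1 d.+1 = Zprod E Ahat l.+1 d *m Zhat E Ahat (d + l.+1)) // ent_mul.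
have ZE : forall i j u v, i = j -> ent (Zhat E Ahat i) u v = ent (Zhat E Ahat j) u v.
  by move=> i j u v ->.
under eq_bigr => u _ do rewrite (ZE _ _ _ _ (addSnnS d l)).
have e : (d.+1 + l = d + l.+1 :> nat) by apply: addSnnS.
rewrite e.
under eq_bigr => u _ do rewrite mulr_suml.
rewrite exchange_big /=; apply: eq_bigr => s _.
by rewrite mulr_sumr; apply: eq_bigr => u _; rewrite mulrA.
Qed.

Lemma entN (R : pzRingType) m n (B : 'M[R]_(m, n)) r c : ent (- B) r c = - ent B r c.
Proof.
case: (ltnP r m) => hr; last by rewrite !ent_outr // oppr0.
case: (ltnP c n) => hc; last by rewrite !ent_outc // oppr0.
by rewrite !(ent_nat _ hr hc) mxE.
Qed.

Lemma ent1 (R : pzSemiRingType) m r c : ent (1%:M : 'M[R]_m) r c = ((r == c) && (r < m)%N)%:R.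
Proof.
case: (ltnP r m) => hr; last by rewrite ent_outr // andbF.
case: (ltnP c m) => hc; last first.
  by rewrite ent_outc //; case: eqP => // e; subst; move: hr; rewrite ltnNge hc.
by rewrite (ent_nat _ hr hc) mxE andbT.
Qed.

Lemma ent_scale (R : pzSemiRingType) m n (a : R) (B : 'M[R]_(m, n)) r c :
  ent (a *: B) r c = a * ent B r c.
Proof.
case: (ltnP r m) => hr; last by rewrite !ent_outr // mulr0.
case: (ltnP c n) => hc; last by rewrite !ent_outc // mulr0.
by rewrite !(ent_nat _ hr hc) mxE.
Qed.

Lemma ent_col (T : nmodType) m n (B : 'M[T]_(m, n)) (c : 'I_n) g :
  ent (col c B) g 0 = ent B g c.
Proof.
case: (ltnP g m) => hg; last by rewrite !ent_outr.
by rewrite (ent_nat _ hg (ltn0Sn 0)) mxE -ent_ord.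
Qed.

Section Tri.
Variable C : numClosedFieldType.

Definition utent m p (B : 'M[C]_(m, p)) := forall r c, (c < r)%N -> ent B r c = 0.

Lemma utent_mul m n p (A : 'M[C]_(m, n)) (B : 'M[C]_(n, p)) :
  utent A -> utent B -> utent (A *m B).
Proof.
move=> hA hB r c hcr; rewrite ent_mul big1 // => s _.
case: (ltnP s r) => h; first by rewrite hA // mul0r.
by rewrite hB ?mulr0 //; apply: leq_trans hcr h.
Qed.

Lemma diag_mul m n p (A : 'M[C]_(m, n)) (B : 'M[C]_(n, p)) c :
  utent A -> utent B -> (c < n)%N -> ent (A *m B) c c = ent A c c * ent B c c.
Proof.
move=> hA hB hc; rewrite ent_mul (bigD1 (Ordinal hc)) //= big1 ?addr0 // => s hs.
have : (s : nat) != c by apply/eqP => e; move: hs; rewrite -(inj_eq val_inj) /= e eqxx.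
rewrite neq_ltn => /orP [h|h]; first by rewrite hA // mul0r.
by rewrite hB // mulr0.
Qed.

Lemma utri_utent m (U : 'M[C]_m) : upper_tri U -> utent U.
Proof.
move=> hU r c hcr; case: (ltnP r m) => hr; last by rewrite ent_outr.
have hc : (c < m)%N by apply: ltn_trans hr.
by rewrite (ent_nat _ hr hc) hU.
Qed.

Lemma inv_ut m (U : 'M[C]_m) : upper_tri U -> U \in unitmx ->
  utent (invmx U) /\ forall c, (c < m)%N -> ent (invmx U) c c != 0.
Proof.
move=> hU hu.
have Ud := utri_diag hU hu.
have EF := mulmxV hu.
have ut : utent (invmx U).
  move=> r c hcr; case: (ltnP r m) => hr; last by rewrite ent_outr.
  have hc : (c < m)%N by apply: ltn_trans hr.
  rewrite (ent_nat _ hr hc).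
  apply: (tri_support (y := fun s => invmx U s (Ordinal hc)) (T := c.+1) hU Ud) => //.
  move=> r' hr'; have /matrixP/(_ r' (Ordinal hc)) h := EF; rewrite !mxE in h; rewrite h.
  by rewrite (_ : (r' == Ordinal hc) = false) //; apply/negbTE; rewrite -(inj_eq val_inj) /= neq_ltn hr' orbT.
split=> // c hc.
have := diag_mul (utri_utent hU) ut hc; rewrite EF ent1 eqxx hc /= => h.
by apply/eqP => e; move: h; rewrite e mulr0 => /eqP; rewrite oner_eq0.
Qed.

End Tri.

Section Main.
Variable C : numClosedFieldType.
Variables (k : nat) (t : nat -> nat) (E : forall i, 'M[C]_(t i))
  (Ahat : forall i, 'M[C]_(t i.+1)).
Hypothesis hk : (1 <= k)%N.
Hypothesis ht : forall i, (1 <= i < k)%N -> (t i.+1 <= t i)%N.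
Hypothesis htk : (1 <= t k)%N.
Hypothesis htk1 : t k.+1 = 0%N.
Hypothesis hE : forall i, (1 <= i <= k)%N -> upper_tri (E i) /\ E i \in unitmx.
Hypothesis hA : forall i, (1 <= i < k)%N -> upper_tri (Ahat i) /\ Ahat i \in unitmx.

Local Notation n := (nsum t k).

Definition Mgen (F : comNzRingType) (phi : C -> F) (b : F) : 'M[F]_n :=
  map_mx phi (A0mx k Ahat) + b *: map_mx phi (E0mx k E).

Lemma pos_lt l r : (1 <= l <= k)%N -> (r < t l)%N -> (boff t l + r < n)%N.
Proof.
move=> hl hr; have h1 : (l.+1 <= k.+1)%N by lia.
have := boff_mono t h1; rewrite boffS; last by lia.
move=> h; apply: leq_trans h; by rewrite ltn_add2l.
Qed.

Lemma Mgen_ent (F : comNzRingType) (phi : C -> F) b l r l' s :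
  (1 <= l <= k)%N -> (r < t l)%N -> (1 <= l' <= k)%N -> (s < t l')%N ->
  ent (Mgen phi b) (boff t l + r) (boff t l' + s) =
  phi (if l' == l.+1 then ent (Ablk Ahat l) r s else 0) +
  b * phi (if l == l' then ent (E l) r s else 0).
Proof.
move=> hl hr hl' hs.
rewrite (ent_nat _ (pos_lt hl hr) (pos_lt hl' hs)) !mxE /=.
by rewrite !blk_at // !loc_at.
Qed.

Lemma Mgen_block (F : comNzRingType) (phi : C -> F) b (v : 'cV[F]_n) l r :
  phi 0 = 0 -> (1 <= l <= k)%N -> (r < t l)%N ->
  ent (Mgen phi b *m v) (boff t l + r) 0 =
  (if (l < k)%N then \sum_(s < t l.+1) phi (ent (Ablk Ahat l) r s) * ent v (boff t l.+1 + s) 0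
   else 0) + b * \sum_(s < t l) phi (ent (E l) r s) * ent v (boff t l + s) 0.
Proof.
move=> phi0 hl hr.
rewrite ent_mul (sum_blocks t k (fun h => ent (Mgen phi b) _ h * ent v h 0)).
have inner : forall l', (1 <= l' < k.+1)%N ->
  \sum_(s < t l') ent (Mgen phi b) (boff t l + r) (boff t l' + s) * ent v (boff t l' + s) 0 =
  (if l' == l.+1 then \sum_(s < t l') phi (ent (Ablk Ahat l) r s) * ent v (boff t l' + s) 0 else 0)
  + (if l' == l then b * \sum_(s < t l') phi (ent (E l) r s) * ent v (boff t l' + s) 0 else 0).
  move=> l' hl'; have hl'' : (1 <= l' <= k)%N by lia.
  rewrite (eq_bigr (fun s : 'I_(t l') => phi (if l' == l.+1 then ent (Ablk Ahat l) r s else 0)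
     * ent v (boff t l' + s) 0 + b * (phi (if l == l' then ent (E l) r s else 0) * ent v (boff t l' + s) 0))); last first.
    by move=> s _; rewrite Mgen_ent // mulrDl mulrA.
  rewrite big_split /= -mulr_sumr; congr (_ + _).
    by case: eqP => _ //; rewrite big1 // => s _; rewrite phi0 mul0r.
  rewrite eq_sym; case: eqP => _ //; rewrite big1 ?mulr0 // => s _; by rewrite phi0 mul0r.
rewrite (eq_big_nat _ _ inner) big_split /= !big_nat_pick.
have -> : (1 <= l.+1 < k.+1)%N = (l < k)%N by lia.
by have -> : (1 <= l < k.+1)%N = true by lia.
Qed.


Lemma t_mono i j : (1 <= i <= j)%N -> (j <= k)%N -> (t j <= t i)%N.
Proof.
move=> /andP [hi hij]; elim: j hij => [|j IH] hij hj; first by lia.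
case: (ltnP i j.+1) => h; last by have -> : i = j.+1 by lia.
apply: leq_trans (ht _) (IH _ _); lia.
Qed.

Lemma t_pos i : (1 <= i <= k)%N -> (1 <= t i)%N.
Proof. by move=> hi; apply: leq_trans htk (t_mono hi _). Qed.

Lemma E_diag l : (1 <= l <= k)%N -> forall i, E l i i != 0.
Proof. by move=> hl; case: (hE hl) => h1 h2; apply: utri_diag. Qed.

Lemma A_diag l : (1 <= l < k)%N -> forall i, Ahat l i i != 0.
Proof. by move=> hl; case: (hA hl) => h1 h2; apply: utri_diag. Qed.

Lemma Mgen_inj (F : fieldType) (phi : C -> F) b :
  phi 0 = 0 -> (forall x, x != 0 -> phi x != 0) -> b != 0 ->
  forall v : 'cV[F]_n, Mgen phi b *m v = 0 -> v = 0.
Proof.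
move=> phi0 phinz bnz v Hv.
have step : forall l, (1 <= l <= k)%N ->
    ((l < k)%N -> forall s, (s < t l.+1)%N -> ent v (boff t l.+1 + s) 0 = 0) ->
    forall s, (s < t l)%N -> ent v (boff t l + s) 0 = 0.
  move=> l hl IH.
  have key : forall r : 'I_(t l), (0 <= r)%N -> \sum_s map_mx phi (E l) r s *
        (fun s : 'I_(t l) => ent v (boff t l + s) 0) s = 0.
    move=> r _; have := Mgen_block b v phi0 hl (ltn_ord r).
    rewrite Hv ent0 => /esym.
    rewrite (_ : (if (l < k)%N then _ else _) = 0); last first.
      case: ifP => // hlk; rewrite big1 // => s _.
      by rewrite IH ?mulr0.
    rewrite add0r => /eqP; rewrite mulf_eq0 (negPf bnz) /= => /eqP h.
    by rewrite -[X in _ = X]h; apply: eq_bigr => s _; rewrite mxE ent_ord.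
  move=> s hs; have := tri_support _ _ key (s := Ordinal hs) isT; apply.
    by move=> i j hij; rewrite mxE (proj1 (hE hl)) // phi0.
  by move=> i; rewrite mxE; apply: phinz; apply: E_diag.
have blocks : forall d, (d < k)%N -> forall s, (s < t (k - d))%N ->
    ent v (boff t (k - d) + s) 0 = 0.
  elim=> [|d IH] hd.
    by rewrite subn0; apply: step => //; [lia | rewrite ltnn].
  apply: step; first by lia.
  move=> hlk s hs; have e : (k - d.+1).+1 = (k - d)%N by lia.
  rewrite e; apply: IH; [lia | by rewrite -e].
apply/matrixP => i j; rewrite (ord1 j) mxE.
have [l [s [hl hs ei]]] := pos_decomp (ltn_ord i).
rewrite -ent_ord ei.
have -> : l = (k - (k - l))%N by lia.
apply: blocks; first by lia.
by have -> : (k - (k - l))%N = l by lia.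
Qed.

Lemma rank_Mgen (F : fieldType) (phi : C -> F) b :
  phi 0 = 0 -> (forall x, x != 0 -> phi x != 0) -> b != 0 ->
  \rank (Mgen phi b) = n.
Proof. by move=> *; apply: colfree; apply: Mgen_inj. Qed.

Lemma rankF_pencil : rankF (pencil k E Ahat) = n.
Proof.
rewrite /rankF.
have -> : map_mx (@tofracP C) (pencil k E Ahat) =
   Mgen (fun x => tofracP x%:P) (tofracP 'X).
  apply/matrixP => i j; rewrite !mxE /tofracP.
  by rewrite rmorphD rmorphM.
apply: rank_Mgen.
- by rewrite /tofracP polyC0 rmorph0.
- by move=> x hx; rewrite /tofracP tofrac_eq0 polyC_eq0.
- by rewrite /tofracP tofrac_eq0 polyX_eq0.
Qed.

Lemma evalmx_pencil mu : evalmx (pencil k E Ahat) mu = Mgen (fun x => x) mu.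
Proof.
apply/matrixP => i j; rewrite !mxE.
by rewrite hornerD hornerM hornerX !hornerC.
Qed.

Lemma eigen_part (mu : C) : is_eigenvalue (pencil k E Ahat) mu <-> mu = 0.
Proof.
rewrite /is_eigenvalue rankF_pencil evalmx_pencil; split.
  move=> h; apply/eqP; apply/negP => /negP hmu.
  by rewrite rank_Mgen // ltnn in h.
move=> ->.
have ht1 : (0 < t 1)%N by apply: t_pos; lia.
have h0 : (0 < n)%N by have := pos_lt (l := 1) (r := 0) ltac:(lia) ht1; rewrite boff1.
pose v : 'cV[C]_n := \col_i (if (i : nat) == 0%N then 1 else 0).
have vnz : v != 0.
  apply/negP => /eqP /matrixP /(_ (Ordinal h0) 0); rewrite !mxE /=.
  by move/eqP; rewrite oner_eq0.
have Mv : Mgen (fun x => x) 0 *m v = 0.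
  apply/matrixP => i j; rewrite (ord1 j) [RHS]mxE.
  have [l [s [hl hs ei]]] := pos_decomp (ltn_ord i).
  rewrite -ent_ord ei Mgen_block // mul0r addr0.
  case: ifP => // hlk; rewrite big1 // => r _.
  have hge : (1 <= boff t l.+1 + r)%N.
    have := boff_mono t (_ : 2 <= l.+1)%N; rewrite boffS // boff1 /=.
    move=> /(_ ltac:(lia)) => h; apply: leq_trans ht1 _; lia.
  case: (ltnP (boff t l.+1 + r) n) => hb; last by rewrite (@ent_outr _ _ _ v _ _ hb) mulr0.
  rewrite (ent_nat _ hb (ltn0Sn 0)) mxE /= (_ : (_ == 0)%N = false) ?mulr0 //; lia.
rewrite ltn_neqAle rank_leq_row andbT; apply/negP => hn.
have hu : Mgen (fun x => x) 0 \in unitmx by rewrite -row_free_unit; exact: hn.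
move/negP: vnz; apply; apply/eqP.
by rewrite -(mulKmx hu v) Mv mulmx0.
Qed.

Lemma Ablk_ent l r s : (r < t l)%N -> (s < t l.+1)%N ->
  ent (Ablk Ahat l) r s = ent (Ahat l) r s.
Proof. by move=> hr hs; rewrite (ent_nat _ hr hs) mxE. Qed.

Lemma Ablk_ut l : (1 <= l < k)%N -> utent (Ablk Ahat l).
Proof.
move=> hl r s hsr; case: (ltnP r (t l)) => hr; last by rewrite ent_outr.
case: (ltnP s (t l.+1)) => hs; last by rewrite ent_outc.
by rewrite Ablk_ent //; apply: (utri_utent (proj1 (hA hl))).
Qed.

Lemma Ablk_diag l s : (1 <= l < k)%N -> (s < t l.+1)%N -> ent (Ablk Ahat l) s s != 0.
Proof.
move=> hl hs; have hs' : (s < t l)%N by apply: leq_trans hs (ht hl).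
by rewrite Ablk_ent // (ent_nat _ hs hs); apply: A_diag.
Qed.

Lemma Zhat_ut l : (1 <= l < k)%N -> utent (Zhat E Ahat l) /\
  forall s, (s < t l.+1)%N -> ent (Zhat E Ahat l) s s != 0.
Proof.
move=> hl; have hl' : (1 <= l <= k)%N by lia.
have [iu id] := inv_ut (proj1 (hE hl')) (proj2 (hE hl')).
split.
  move=> r c hcr; rewrite /Zhat entN (utent_mul iu (Ablk_ut hl)) ?oppr0 //.
move=> s hs; have hs' : (s < t l)%N by apply: leq_trans hs (ht hl).
rewrite /Zhat entN oppr_eq0 (diag_mul iu (Ablk_ut hl) hs') mulf_neq0 //.
  by apply: id.
by apply: Ablk_diag.
Qed.

Lemma Zprod_ut l d : (1 <= l)%N -> (d + l <= k)%N ->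
  utent (Zprod E Ahat l d) /\
  forall c, (c < t (d + l))%N -> ent (Zprod E Ahat l d) c c != 0.
Proof.
move=> hl; elim: d => [|d IH] hd.
  split; first by move=> r c hcr; rewrite /= ent1 (_ : (r == c) = false) //; lia.
  by move=> c hc; rewrite /= ent1 eqxx hc oner_eq0.
have [u1 d1] := IH ltac:(lia).
have [u2 d2] := Zhat_ut (l := (d + l)%N) ltac:(lia).
split; first exact: utent_mul u1 u2.
move=> c hc.
have hc1 : (c < t (d + l))%N.
  apply: leq_trans hc _; have -> : (d.+1 + l)%N = (d + l).+1 by lia.
  apply: ht; lia.
rewrite /= (diag_mul u1 u2 hc1) mulf_neq0 //; first exact: d1.
by apply: d2; have <- : (d.+1 + l)%N = (d + l).+1 by lia.
Qed.

Lemma EZhat l : (1 <= l <= k)%N -> E l *m Zhat E Ahat l = - Ablk Ahat l.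
Proof. by move=> hl; rewrite /Zhat mulmxN mulmxA mulmxV ?mul1mx //; exact: (proj2 (hE hl)). Qed.

Lemma Qcat_ent l s c : (c < t 1)%N -> (1 <= l <= k)%N -> (s < t l)%N ->
  ent (Qcat k E Ahat) (boff t l + s) c =
  if (l <= qblk t k c)%N then
    'X^(l.-1) * (ent (Zprod E Ahat l (qblk t k c - l)) s c)%:P else 0.
Proof.
move=> hc hl hs.
have [hq1 hq2 hq3] := qblk_spec hk hc htk1.
have hg := pos_lt hl hs.
rewrite (ent_nat _ hg hc) mxE /=.
have hc' : (c - t (qblk t k c).+1 < t (qblk t k c) - t (qblk t k c).+1)%N by lia.
rewrite (ent_nat _ hg hc') mxE /= subnK //.
by rewrite (ent_nat _ hg hq2) mxE /= blk_at // loc_at.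
Qed.

Lemma poly_sum m (a b : nat -> C) j :
  \sum_(s < m) (a s)%:P * ('X^j * (b s)%:P) = 'X^j * (\sum_(s < m) a s * b s)%:P.
Proof.
rewrite rmorph_sum mulr_sumr; apply: eq_bigr => s _.
by rewrite rmorphM mulrCA.
Qed.

Definition wvec (c : nat) : 'cV[{poly C}]_n :=
  \col_g (if blk t k g == qblk t k c then (ent (E (qblk t k c)) (loc t k g) c)%:P else 0).

Lemma EZprod l d r c : (1 <= l <= k)%N ->
  ent (E l *m Zprod E Ahat l d.+1) r c = - ent (Ablk Ahat l *m Zprod E Ahat l.+1 d) r c.
Proof.
move=> hl; rewrite ent_mul.
under eq_bigr => s _ do rewrite Zprod_left.
by rewrite -ent_mul mulmxA EZhat // mulNmx entN.
Qed.

Lemma Qcol_zero (c : 'I_(t 1)) :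
  pencil k E Ahat *m col c (Qcat k E Ahat) = 'X^(qblk t k c) *: wvec c.
Proof.
have [hq1 hq2 hq3] := qblk_spec hk (ltn_ord c) htk1.
set q := qblk t k c in hq1 hq2 hq3 *.
apply/matrixP => i j; rewrite (ord1 j).
have [l [r [hl hr ei]]] := pos_decomp (ltn_ord i).
rewrite -!ent_ord ei ent_scale (ent_nat (wvec c) (pos_lt hl hr) (ltn0Sn 0)) mxE /= blk_at // loc_at //.
rewrite (_ : pencil k E Ahat = Mgen (fun x => x%:P) 'X) // Mgen_block //.
have Apart : (if (l < k)%N then \sum_(s < t l.+1) (ent (Ablk Ahat l) r s)%:P *
      ent (col c (Qcat k E Ahat)) (boff t l.+1 + s) 0 else 0) =
    if (l.+1 <= q)%N then 'X^l * (ent (Ablk Ahat l *m Zprod E Ahat l.+1 (q - l.+1)) r c)%:P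
    else 0.
  case: ifP => hlk; last by rewrite ifF //; lia.
  have hl1 : (1 <= l.+1 <= k)%N by lia.
  under eq_bigr => s _ do rewrite ent_col Qcat_ent //.
  case: ifP => hlq; last by rewrite big1 // => s _; rewrite mulr0.
  transitivity ('X^l * (\sum_(s < t l.+1) ent (Ablk Ahat l) r s * ent (Zprod E Ahat l.+1 (q - l.+1)) s c)%:P); first exact: (poly_sum (t l.+1) (fun s => ent (Ablk Ahat l) r s) (fun s => ent (Zprod E Ahat l.+1 (q - l.+1)) s c) l).
  by rewrite -ent_mul.
have Bpart : 'X * \sum_(s < t l) (ent (E l) r s)%:P * ent (col c (Qcat k E Ahat)) (boff t l + s) 0 =
    if (l <= q)%N then 'X^l * (ent (E l *m Zprod E Ahat l (q - l)) r c)%:P else 0.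
  under eq_bigr => s _ do rewrite ent_col Qcat_ent //.
  case: ifP => hlq; last by rewrite big1 ?mulr0 // => s _; rewrite mulr0.
  rewrite (_ : \sum_(s < t l) _ = 'X^(l.-1) * (\sum_(s < t l) ent (E l) r s * ent (Zprod E Ahat l (q - l)) s c)%:P); last exact: (poly_sum (t l) (fun s => ent (E l) r s) (fun s => ent (Zprod E Ahat l (q - l)) s c) l.-1).
  rewrite -ent_mul mulrA -exprS prednK //; lia.
rewrite Apart Bpart.
have [hlq|hlq] : (l < q)%N \/ (q <= l)%N by lia.
  have -> : (l.+1 <= q)%N = true by lia.
  have -> : (l <= q)%N = true by lia.
  have -> : (l == q) = false by lia.
  have e : (q - l = (q - l.+1).+1)%N by lia.
  by rewrite ent_mul e -ent_mul EZprod // rmorphN mulrN addrN mulr0.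
have -> : (l.+1 <= q)%N = false by lia.
have [hlq'|hlq'] : (q < l)%N \/ (l <= q)%N by lia.
  have -> : (l <= q)%N = false by lia.
  have -> : (l == q) = false by lia.
  by rewrite add0r mulr0.
have -> : (l <= q)%N = true by lia.
have el : l = q by lia.
subst l; rewrite eqxx add0r ent_mul subnn -ent_mul /= mulmx1.
by [].
Qed.

Lemma Qcat_eval0 l s c : (c < t 1)%N -> (1 <= l <= k)%N -> (s < t l)%N ->
  (ent (Qcat k E Ahat) (boff t l + s) c).[0] =
  if l == 1%N then ent (Zprod E Ahat 1 (qblk t k c - 1)) s c else 0.
Proof.
move=> hc hl hs; have [hq1 hq2 hq3] := qblk_spec hk hc htk1.
rewrite Qcat_ent //; case: eqP => [el|nl].
  by subst l; rewrite ifT; [rewrite expr0 mul1r hornerC | lia].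
case: ifP => _; last by rewrite horner0.
rewrite hornerM hornerXn expr0n /=.
by rewrite (_ : (l.-1 == 0)%N = false) ?mul0r //; lia.
Qed.

Lemma Qcat_eval1 s c : (c < t 1)%N -> (s < t 1)%N ->
  (ent (Qcat k E Ahat) s c).[0] = ent (Zprod E Ahat 1 (qblk t k c - 1)) s c.
Proof.
move=> hc hs; have hl1 : (1 <= 1 <= k)%N by lia.
by have := Qcat_eval0 hc hl1 hs; rewrite boff1 add0n eqxx.
Qed.

Lemma Zp1_ut c : (c < t 1)%N ->
  utent (Zprod E Ahat 1 (qblk t k c - 1)) /\
  ent (Zprod E Ahat 1 (qblk t k c - 1)) c c != 0.
Proof.
move=> hc; have [hq1 hq2 hq3] := qblk_spec hk hc htk1.
have [u d] := Zprod_ut (l := 1) (d := (qblk t k c - 1)%N) isT ltac:(lia).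
split=> //; apply: d.
by rewrite (_ : (qblk t k c - 1 + 1)%N = qblk t k c) //; lia.
Qed.

Lemma Qcol_zd (c : 'I_(t 1)) :
  zero_direction (pencil k E Ahat) 0 (col c (Qcat k E Ahat)) (qblk t k c).
Proof.
have [hq1 hq2 hq3] := qblk_spec hk (ltn_ord c) htk1.
have hl1 : (1 <= 1 <= k)%N by lia.
split; first by lia.
  have hcn := pos_lt hl1 (ltn_ord c); rewrite boff1 add0n in hcn.
  apply/negP => /eqP /matrixP /(_ (Ordinal hcn) 0); rewrite [in X in X -> _]mxE [RHS]mxE.
  rewrite -ent_ord ent_col /= Qcat_eval1 // => /eqP.
  by rewrite (negPf (proj2 (Zp1_ut (ltn_ord c)))).
exists (wvec c); split; first by rewrite polyC0 subr0 Qcol_zero.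
have hg := pos_lt hq1 hq2.
apply/negP => /eqP /matrixP /(_ (Ordinal hg) 0); rewrite !mxE /= blk_at // loc_at // eqxx hornerC.
by apply/eqP; rewrite (ent_ord (E _) (Ordinal hq2) (Ordinal hq2)); apply: E_diag.
Qed.

Lemma Qcat_rank : \rank (evalmx (Qcat k E Ahat) 0) = t 1.
Proof.
apply: colfree => v Hv.
have hl1 : (1 <= 1 <= k)%N by lia.
pose U : 'M[C]_(t 1) := \matrix_(r, c) ent (Zprod E Ahat 1 (qblk t k c - 1)) r c.
have key : forall r : 'I_(t 1), (0 <= r)%N -> \sum_c U r c * (fun c => v c 0) c = 0.
  move=> r _; have hrn := pos_lt hl1 (ltn_ord r); rewrite boff1 add0n in hrn.
  have /matrixP /(_ (Ordinal hrn) 0) := Hv; rewrite !mxE => h.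
  rewrite -[X in _ = X]h; apply: eq_bigr => c _; congr (_ * _).
  by rewrite [LHS]mxE [RHS]mxE -ent_ord /= Qcat_eval1.
apply/matrixP => c j; rewrite (ord1 j) mxE.
apply: (tri_support _ _ key) => //.
  by move=> r c' hcr; rewrite mxE (proj1 (Zp1_ut (ltn_ord c'))).
by move=> c'; rewrite mxE (proj2 (Zp1_ut (ltn_ord c'))).
Qed.

Lemma coef_eq (x w : 'cV[{poly C}]_n) kk :
  pencil k E Ahat *m x = 'X^kk *: w ->
  forall l r i, (1 <= l <= k)%N -> (r < t l)%N -> (i < kk)%N ->
  (if (l < k)%N then \sum_(s < t l.+1) ent (Ablk Ahat l) r s * (ent x (boff t l.+1 + s) 0)`_i
   else 0) +
  (if i is i'.+1 then \sum_(s < t l) ent (E l) r s * (ent x (boff t l + s) 0)`_i' else 0) = 0.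
Proof.
move=> Hx l r i hl hr hi.
have := Mgen_block 'X x (polyC0 _) hl hr.
rewrite (_ : Mgen (fun x => x%:P) 'X = pencil k E Ahat) // Hx ent_scale.
move=> /(congr1 (fun p : {poly C} => p`_i)); rewrite coefXnM hi => /esym.
rewrite coefD; congr (_ + _ = _).
  case: ifP => _; last by rewrite coef0.
  by rewrite coef_sum; apply: eq_bigr => s _; rewrite coefCM.
by rewrite coefXM; case: i hi => [|i] hi //=; rewrite coef_sum; apply: eq_bigr => s _; rewrite coefCM.
Qed.

Lemma kernel_zero (x w : 'cV[{poly C}]_n) kk :
  pencil k E Ahat *m x = 'X^kk *: w -> (1 <= kk)%N ->
  forall h, (t 1 <= h)%N -> (ent x h 0)`_0 = 0.
Proof.
move=> Hx hkk h hh.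
case: (ltnP h n) => hn; last by rewrite ent_outr // coef0.
have [l [s [hl hs ei]]] := pos_decomp hn; subst h.
clear hn; case: l hl hs hh => [|l'] hl hs hh; first by lia.
have hl' : (1 <= l')%N.
  case: (l') hs hh => [|l''] hs hh //; rewrite boff1 add0n in hh; lia.
have hl'k : (1 <= l' < k)%N by lia.
have key : forall r : 'I_(t l'.+1), (0 <= r)%N ->
    \sum_s Ahat l' r s * (fun s : 'I_(t l'.+1) => (ent x (boff t l'.+1 + s) 0)`_0) s = 0.
  move=> r _; have hr : (r < t l')%N by apply: leq_trans (ltn_ord r) (ht hl'k).
  have := coef_eq Hx (l := l') (i := 0) ltac:(lia) hr hkk.
  rewrite ifT ?addr0; last by lia.
  move=> h; rewrite -[X in _ = X]h; apply: eq_bigr => s' _.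
  by rewrite Ablk_ent // ent_ord.
apply: (tri_support _ _ key (s := Ordinal hs)) => //.
  exact: (proj1 (hA hl'k)).
exact: A_diag.
Qed.

Lemma chain_zero (x w : 'cV[{poly C}]_n) kk q :
  pencil k E Ahat *m x = 'X^kk *: w -> (1 <= q <= k)%N -> (q < kk)%N ->
  forall s, (t q.+1 <= s)%N -> (s < t 1)%N -> (ent x s 0)`_0 = 0.
Proof.
move=> Hx hq hqk.
pose P l := forall s, (t q.+1 <= s)%N -> (s < t l)%N -> (ent x (boff t l + s) 0)`_(l.-1) = 0.
have step : forall l, (1 <= l)%N -> (l < k)%N -> (l <= q)%N -> P l.+1 -> P l.
  move=> l hl hlk hlq IH.
  have hl' : (1 <= l <= k)%N by lia.
  case: l hl hlk hlq IH hl' => [|l] // hl hlk hlq IH hl' s hs1 hs2.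
  have key : forall r : 'I_(t l.+1), (t q.+1 <= r)%N ->
      \sum_s E l.+1 r s * (fun s : 'I_(t l.+1) => (ent x (boff t l.+1 + s) 0)`_l) s = 0.
    move=> r hr.
    have := coef_eq Hx (l := l.+1) (i := l.+1) hl' (ltn_ord r) ltac:(lia).
    rewrite ifT; last by lia.
    rewrite big1 ?add0r; last first.
      move=> s' _; case: (ltnP s' r) => hsr; first by rewrite (Ablk_ut _ hsr) ?mul0r //; lia.
      by rewrite (IH s') ?mulr0 //; apply: leq_trans hr hsr.
    move=> h; rewrite -[X in _ = X]h; apply: eq_bigr => s' _.
    by rewrite ent_ord.
  apply: (tri_support _ _ key (s := Ordinal hs2)) => //.
    exact: (proj1 (hE hl')).
  exact: E_diag.
pose L := if (q < k)%N then q.+1 else k.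
have base : P L.
  rewrite /L; case: ifP => hqk'.
    by move=> s hs1 hs2; lia.
  have eq : q = k by lia.
  have hk' : (1 <= k <= k)%N by lia.
  move=> s hs1 hs2.
  have key : forall r : 'I_(t k), (0 <= r)%N ->
      \sum_s E k r s * (fun s : 'I_(t k) => (ent x (boff t k + s) 0)`_(k.-1)) s = 0.
    move=> r _.
    have [k' ek] : exists k', k = k'.+1 by exists k.-1; lia.
    have := coef_eq Hx (l := k) (i := k'.+1) hk' (ltn_ord r) ltac:(lia).
    rewrite ltnn add0r /= => h.
    have ek' : k.-1 = k' by rewrite ek.
    rewrite ek' -[X in _ = X]h; apply: eq_bigr => s' _.
    by rewrite ent_ord.
  apply: (tri_support _ _ key (s := Ordinal hs2)) => //.
    exact: (proj1 (hE hk')).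
  exact: E_diag.
have all : forall d, (d < L)%N -> P (L - d)%N.
  elim=> [|d IHd] hd; first by rewrite subn0.
  apply: step; rewrite /L in hd *; try by case: ifP hd => ? ?; lia.
  have -> : (L - d.+1).+1 = (L - d)%N by rewrite /L in hd *; case: ifP hd => ? ?; lia.
  apply: IHd; lia.
have P1 : P 1.
  have hL : (1 <= L)%N by rewrite /L; case: ifP => _; lia.
  have := all (L - 1)%N ltac:(lia); rewrite (_ : (L - (L - 1))%N = 1%N) //; lia.
move=> s hs1 hs2; have := P1 s hs1 hs2; by rewrite boff1 add0n.
Qed.

Lemma Qcat_low i c : (c < t 1)%N -> (c < i)%N -> (ent (Qcat k E Ahat) i c).[0] = 0.
Proof.
move=> hc hci; case: (ltnP i n) => hn; last by rewrite ent_outr // horner0.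
have [l [s [hl hs ei]]] := pos_decomp hn; subst i.
rewrite Qcat_eval0 //; case: eqP => // el; subst l.
rewrite boff1 add0n in hci.
exact: (proj1 (Zp1_ut hc)).
Qed.

Lemma zd_eq (x : 'cV[{poly C}]_n) kk : zero_direction (pencil k E Ahat) 0 x kk ->
  (1 <= kk)%N /\ exists w, pencil k E Ahat *m x = 'X^kk *: w.
Proof.
case=> h1 _ [w [hw _]]; split=> //; exists w.
by rewrite hw polyC0 subr0.
Qed.

Lemma eval0_ent m s (M : 'M[{poly C}]_(m, s)) (i : 'I_m) (j : 'I_s) :
  evalmx M 0 i j = (ent M i j).[0].
Proof. by rewrite mxE ent_ord. Qed.

Lemma main_part2 p (N : 'M[{poly C}]_(n, p)) :
  is_right_minimal_basis (pencil k E Ahat) N ->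
  maximal_set (pencil k E Ahat) N 0 (Qcat k E Ahat) (@Qord t k).
Proof.
move=> [[_ _ hp] _]; rewrite rankF_pencil in hp.
have p0 : p = 0%N by lia.
subst p.
split.
- split.
    split; first by move=> i; exact: Qcol_zd.
    by rewrite /full_col_rank /evalmx row_thin_mx -/(evalmx _ 0) Qcat_rank.
  move=> s' R' ord' [zd fr].
  move: fr; rewrite /full_col_rank /evalmx row_thin_mx -/(evalmx _ 0) => fr.
  suff : (0 + s' <= t 1)%N by [].
  rewrite -fr.
  apply: rank_rows0 => i j hi.
  have [hk1 [w hw]] := zd_eq (zd j).
  rewrite eval0_ent -ent_col horner_coef0.
  exact: (kernel_zero hw hk1).
- split; first by move=> i j hij; apply: qblk_mono.
  by move=> i; have [/andP [h _] _ _] := qblk_spec hk (ltn_ord i) htk1.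
move=> j [x [kk [[zd _] hkk frk]]].
move: frk; rewrite /full_col_rank /evalmx row_thin_mx -/(evalmx _ 0) => frk.
have [hq1 hq2 hq3] := qblk_spec hk (ltn_ord j) htk1.
have [hk1 [w hw]] := zd_eq zd.
have : (\rank (evalmx (row_mx (first_cols (Qcat k E Ahat) j) x) 0) <= j)%N.
  apply: rank_rows0 => i c hi.
  rewrite mxE -(splitK c); case: (split c) => c' /=.
    rewrite row_mxEl mxE -ent_ord Qcat_low //=.
      exact: leq_trans (ltn_ord c') (ltnW (ltn_ord j)).
    exact: leq_trans (ltn_ord c') hi.
  rewrite row_mxEr (ord1 c') -ent_ord horner_coef0.
  case: (ltnP i (t 1)) => hit; last exact: (kernel_zero hw hk1).
  apply: (chain_zero hw (q := qblk t k j)) => //.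
  exact: leq_trans hq3 hi.
by rewrite frk addn1 ltnn.
Qed.

End Main.

Unset Implicit Arguments.

Theorem theorem5p10 (C : numClosedFieldType) (k : nat) (t : nat -> nat)
    (E : forall i, 'M[C]_(t i)) (Ahat : forall i, 'M[C]_(t i.+1)) :
  (1 <= k)%N ->
  (forall i, (1 <= i < k)%N -> (t i.+1 <= t i)%N) ->
  (1 <= t k)%N ->
  t k.+1 = 0%N ->
  (forall i, (1 <= i <= k)%N -> upper_tri (E i) /\ E i \in unitmx) ->
  (forall i, (1 <= i < k)%N -> upper_tri (Ahat i) /\ Ahat i \in unitmx) ->
  (forall mu : C, is_eigenvalue (pencil k E Ahat) mu <-> mu = 0) /\
  (forall (p : nat) (N : 'M[{poly C}]_(nsum t k, p)),
     is_right_minimal_basis (pencil k E Ahat) N ->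
     maximal_set (pencil k E Ahat) N 0 (Qcat k E Ahat) (@Qord t k)).
Proof.
move=> hk ht htk htk1 hE hA; split.
  by move=> mu; apply: eigen_part.
by move=> p N hN; apply: main_part2.
Qed.
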